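(* Let $F$ be a Ferrers diagram of semiperimeter $n+1$, $T\in\mathsf{EWtab}(F)$ and $S=S(T)$ its supplementary tableau, with $\mathsf{CanonTop}(T)=(U^{(0)}_T,V^{(1)}_T,U^{(1)}_T,V^{(2)}_T,\ldots)$. (a) If $j\in U^{(\ell)}_T$ and $k\in\mathsf{cols}(F)$ with $j<k$, then $k\in V^{(\ell)}_T$ if and only if $S_{jk}=0$ and this $0$ is not a cornersupport entry. (b) If $j\in V^{(\ell)}_T$ and $k\in\mathsf{rows}(F)$ with $k<j$, then $k\in U^{(\ell-1)}_T$ if and only if $S_{kj}=1$ and this $1$ is not a cornersupport entry.
   Context: Ferrers diagrams and graphs: a Ferrers diagram $F$ (English convention) of semiperimeter $n+1$ has rows and columns labeled by $0,\ldots,n$: the $n+1$ unit steps of its south-east boundary path, traversed from top-right to bottom-left, are labeled $0,\ldots,n$; a vertical step labels the row it bounds, a horizontal step the column it bounds (top row labeled $0$). $\mathsf{rows}(F)$, $\mathsf{cols}(F)$ are the label sets; $F$ has a cell in row $i$, column $j$ iff $i<j$. $G(F)$ has vertex set $\{0,\ldots,n\}$ with edges $\{i,j\}$ for $i\in\mathsf{rows}(F)$, $j\in\mathsf{cols}(F)$, $i<j$. Sandpile model on $G(F)$ with sink $0$: configurations $c\in\mathbb{N}^n$; non-sink $v$ unstable if $c_v\ge\deg(v)$; toppling sends one grain to each neighbour (grains to $0$ disappear); toppling the sink adds one grain to each neighbour of $0$. Recurrent: stable configurations obtainable from $c_v=\deg(v)-1$ by adding grains and stabilizing; $\mathsf{Rec}^{\mathsf{min}}$: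 recurrent configurations of minimal total grain count. Canonical toppling of a recurrent $c$: topple the sink ($U^{(0)}_c=\{0\}$), then alternately topple simultaneously all unstable vertices in $\mathsf{cols}(F)$ ($V^{(1)}_c$), all unstable in $\mathsf{rows}(F)$ ($U^{(1)}_c$), etc.; $\mathsf{CanonTop}(c)=(U^{(0)}_c,V^{(1)}_c,U^{(1)}_c,\ldots)$ is an ordered partition of $\{0,\ldots,n\}$. EW-tableaux: a $0/1$-filling $T$ of $F$ ($T_{ij}$ = entry in row $i$, column $j$) such that the top row is all 1s, every other row contains a 0, and no rectangle has 0s in two diagonally opposite corners and 1s in the other two; $\mathsf{EWtab}(F)$ is their set. $\phi_{TC}(T)$ is the configuration with $c_i$ = number of 1s in row $i$ ($i\in\mathsf{rows}(F)$) and $c_i$ = number of 0s in column $i$ ($i\in\mathsf{cols}(F)$); it is a minimal recurrent configuration. Set $\mathsf{CanonTop}(T):=\mathsf{CanonTop}(\phi_{TC}(T))$, with blocks $U^{(i)}_T,V^{(i)}_T$. Supplementary tableau: $S=S(T)$ is the rectangular $|\mathsf{rows}(F)|\times|\mathsf{cols}(F)|$ array with $S_{ij}=1$ if $i\in\mathsf{rows}(F)$ appears in an earlier block of $\mathsf{CanonTop}(T)$ than $j\in\mathsf{cols}(F)$, and $S_{ij}=0$ otherwise; it agrees with $T$ on the cells of $F$. Cornersupport: an entry $x\in\{0,1\}$ at position $(j,k)$ ($j$ a row, $k$ a column) is a cornersupport entry iff there exist a row $j'\ne j$ and a column $k'\ne k$ with $S_{j'k'}\ne x$ and $S_{j'k}=S_{jk'}=x$;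 one then says $S_{j'k'}$ induces $(j,k)$ to be a cornersupport. *)

(* Defs.v *)
From mathcomp Require Import all_boot.
Set Implicit Arguments. Unset Strict Implicit. Unset Printing Implicit Defensive.

(* A Ferrers diagram of semiperimeter n+1 is encoded by its boundary path:
   step i (0 <= i <= n) is vertical (labels a row) iff [isrow i] is true,
   otherwise horizontal (labels a column).  Values of [isrow] beyond n are
   irrelevant. *)
Section Ferrers.
Variables (n : nat) (isrow : nat -> bool).

Definition rowF (i : nat) : bool := (i <= n) && isrow i.
Definition colF (j : nat) : bool := (j <= n) && ~~ isrow j.

(* The top row is labelled 0, and the last step (bottom-left) is horizontal,
   so that every row and every column is nonempty. *)
Definition ferrers : bool := [&& 0 < n, isrow 0 & ~~ isrow n].

Definition cell (i j : nat) : bool := [&& rowF i, colF j & i < j].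

Definition adj (u v : nat) : bool := cell u v || cell v u.
Definition deg (v : nat) : nat := count (adj v) (iota 0 n.+1).

(* EW-tableaux: T i j is the entry in row i, column j (only cells matter). *)
Definition is_EWtab (T : nat -> nat -> bool) : Prop :=
  (forall j, cell 0 j -> T 0 j = true) /\
  (forall i, rowF i -> i <> 0 -> exists j, cell i j /\ T i j = false) /\
  (forall i i' j j', cell i j -> cell i j' -> cell i' j -> cell i' j' ->
      ~ [/\ T i j = false, T i' j' = false, T i j' = true & T i' j = true]).

(* The configuration phi_TC(T) (values at non-sink vertices 1..n are used). *)
Definition phiTC (T : nat -> nat -> bool) (v : nat) : nat :=
  if isrow v then count (fun j => cell v j && T v j) (iota 0 n.+1)
  else count (fun i => cell i v && ~~ T i v) (iota 0 n.+1).

(* Toppling simultaneously all vertices of the list A (grains sent to the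
   sink disappear; the value at the sink 0 is never used). *)
Definition topple (c : nat -> nat) (A : seq nat) (v : nat) : nat :=
  c v - (v \in A) * deg v + count (fun u => (u \in A) && adj u v) (iota 0 n.+1).

(* Vertices toppled at step t >= 1 of the canonical toppling, from
   configuration c: unstable non-sink columns (t odd) / rows (t even). *)
Definition unstable_block (t : nat) (c : nat -> nat) : seq nat :=
  [seq v <- iota 1 n | (if odd t then colF v else rowF v) && (deg v <= c v)].

Fixpoint canon_state (c : nat -> nat) (t : nat) : nat -> nat :=
  match t with
  | 0 => topple c [:: 0]
  | t'.+1 => let s := canon_state c t' in topple s (unstable_block t'.+1 s)
  end.

(* The t-th block of CanonTop(c): (U0, V1, U1, V2, U2, ...) = blocks 0,1,2,3,4,... *)
Definition canon_block (c : nat -> nat) (t : nat) : seq nat :=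
  match t with
  | 0 => [:: 0]
  | t'.+1 => unstable_block t'.+1 (canon_state c t')
  end.

Definition inU (T : nat -> nat -> bool) (l v : nat) : Prop :=
  v \in canon_block (phiTC T) l.*2.
Definition inV (T : nat -> nat -> bool) (l v : nat) : Prop :=
  match l with 0 => False | l'.+1 => v \in canon_block (phiTC T) l'.*2.+1 end.

Definition Supp (T : nat -> nat -> bool) (i j : nat) : Prop :=
  exists t t', [/\ t < t', i \in canon_block (phiTC T) t &
                          j \in canon_block (phiTC T) t'].

Definition Sval (T : nat -> nat -> bool) (i j : nat) (x : bool) : Prop :=
  if x then Supp T i j else ~ Supp T i j.

Definition cornersupport (T : nat -> nat -> bool) (j k : nat) (x : bool) : Prop :=
  exists j' k', [/\ rowF j', colF k', j' <> j, k' <> k &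
    [/\ Sval T j' k' (~~ x), Sval T j' k x & Sval T j k' x]].

End Ferrers.

(* Main.v *)
Require Import Defs.
From mathcomp Require Import all_boot zify.
Set Implicit Arguments. Unset Strict Implicit.

Lemma count_lt (P Q : pred nat) s : (forall x, P x -> Q x) ->
  (exists2 x, x \in s & Q x && ~~ P x) -> count P s < count Q s.
Proof.
move=> HPQ [x xs /andP[Qx nPx]]; elim: s xs => [|y s IH] //=.
rewrite inE => /orP[/eqP ex|xs].
  subst y; rewrite Qx (negbTE nPx) /= add0n add1n ltnS; exact: sub_count.
have := IH xs; case Py: (P y); first by rewrite (HPQ _ Py) /=; lia.
case: (Q y) => /=; lia.
Qed.

Lemma count_le_in (P Q : pred nat) s : (forall x, x \in s -> Q x -> P x) ->
  count Q s <= count P s.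
Proof.
elim: s => [|y s IH] //= H.
have := IH (fun x xs => H x (mem_behead (s:=y::s) xs)).
have := H y (mem_head _ _); case: (Q y); case: (P y) => //= H1; try lia.
Qed.

Lemma count_or (a b : pred nat) s : (forall x, ~~ (a x && b x)) ->
  count (fun x => a x || b x) s = count a s + count b s.
Proof.
move=> H; elim: s => [|y s IH] //=; rewrite IH.
have := H y; case: (a y); case: (b y) => //= _; lia.
Qed.

Lemma count_split (a b : pred nat) s :
  count a s = count (fun x => b x && a x) s + count (fun x => ~~ b x && a x) s.
Proof. elim: s => [|y s IH] //=; rewrite IH; case: (a y); case: (b y) => /=; lia. Qed.

Section Main.
Variables (n : nat) (isrow : nat -> bool) (T : nat -> nat -> bool).
Hypothesis Hf : ferrers n isrow.
Hypothesis HT : is_EWtab n isrow T.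

Local Notation rF := (rowF n isrow).
Local Notation cF := (colF n isrow).
Local Notation cl := (cell n isrow).
Local Notation ad := (adj n isrow).
Local Notation dg := (deg n isrow).
Local Notation cc := (phiTC n isrow T).
Local Notation B := (canon_block n isrow cc).
Local Notation s := (canon_state n isrow cc).

Lemma rF_le v : rF v -> v <= n. Proof. by case/andP. Qed.
Lemma cF_le v : cF v -> v <= n. Proof. by case/andP. Qed.
Lemma rFcF v : rF v -> ~~ cF v. Proof. by rewrite /rowF /colF => /andP[_ ->]; rewrite andbF. Qed.
Lemma rF_or_cF v : v <= n -> rF v || cF v.
Proof. by rewrite /rowF /colF => ->; case: (isrow v). Qed.
Lemma cell_r i j : cl i j -> rF i. Proof. by case/and3P. Qed.
Lemma cell_c i j : cl i j -> cF j. Proof. by case/and3P. Qed.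
Lemma cell_lt i j : cl i j -> i < j. Proof. by case/and3P. Qed.
Lemma adj_sym u v : ad u v = ad v u. Proof. by rewrite /adj orbC. Qed.
Lemma rF0 : rF 0. Proof. by move: Hf; rewrite /ferrers /rowF => /and3P[_ -> _]. Qed.

Lemma adj_row v u : rF v -> ad v u = cl v u.
Proof. move=> rv; rewrite /adj; case E: (cl u v) => //; last by rewrite orbF.
by move: (rFcF rv); rewrite (cell_c E). Qed.
Lemma adj_col v u : cF v -> ad v u = cl u v.
Proof. move=> cv; rewrite /adj; case E: (cl v u) => //=.
by move: (rFcF (cell_r E)); rewrite cv. Qed.

Lemma in_iota0 v : v <= n -> v \in iota 0 n.+1.
Proof. by rewrite mem_iota add0n ltnS. Qed.

Lemma stable v : 0 < v <= n -> cc v < dg v.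
Proof.
case/andP=> v0 vn; case: HT => h0 [hrow hrect].
case/orP: (rF_or_cF vn) => [rv|cv].
- have iv : isrow v by case/andP: rv.
  rewrite /phiTC iv /deg; apply: count_lt.
    by move=> x /andP[cx _]; rewrite adj_row.
  have vne : v <> 0 by move=> e; rewrite e in v0.
  have [j [cj Tj]] := hrow v rv vne.
  exists j; first exact/in_iota0/(cF_le (cell_c cj)).
  by rewrite adj_row // cj Tj.
- have iv : isrow v = false by case/andP: cv => _ /negbTE.
  rewrite /phiTC iv /deg; apply: count_lt.
    by move=> x /andP[cx _]; rewrite adj_col.
  have c0 : cl 0 v by rewrite /cell rF0 cv.
  exists 0; first exact: in_iota0.
  by rewrite adj_col // c0 (h0 v c0).
Qed.

Definition tb t u := has (fun t' => u \in B t') (iota 0 t.+1).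
Definition nb t v := count (fun u => tb t u && ad u v) (iota 0 n.+1).

Lemma B0 v : (v \in B 0) = (v == 0).
Proof. by rewrite /= inE. Qed.

Lemma Bsucc t v : v \in B t.+1 ->
  [/\ 0 < v <= n, (if odd t.+1 then cF v else rF v) & dg v <= s t v].
Proof.
rewrite /canon_block /unstable_block mem_filter mem_iota => /andP[/andP[H1 H2] H3].
by split => //; rewrite H3 -(ltnS v n) -(add1n n).
Qed.

Lemma Bin t v : 0 < v <= n -> (if odd t.+1 then cF v else rF v) -> dg v <= s t v ->
  v \in B t.+1.
Proof.
move=> /andP[v0 vn] H1 H2.
rewrite /canon_block /unstable_block mem_filter mem_iota H1 H2 /= v0 add1n ltnS vn //.
Qed.

Lemma Btype t v : v \in B t -> if odd t then cF v else rF v.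
Proof.
case: t => [|t]; first by rewrite B0 => /eqP ->; exact: rF0.
by case/Bsucc.
Qed.

Lemma tbS t u : tb t.+1 u = tb t u || (u \in B t.+1).
Proof. by rewrite /tb -addn1 iotaD has_cat /= orbF. Qed.

Lemma tb0 t : tb t 0.
Proof. by rewrite /tb /=. Qed.

Lemma s_succ t v : s t.+1 v = s t v - (v \in B t.+1) * dg v +
   count (fun u => (u \in B t.+1) && ad u v) (iota 0 n.+1).
Proof. by []. Qed.

Lemma s0 v : s 0 v = cc v - (v \in [:: 0]) * dg v +
   count (fun u => (u \in [:: 0]) && ad u v) (iota 0 n.+1).
Proof. by []. Qed.

Definition Inv t := forall v, 0 < v <= n -> s t v + tb t v * dg v = cc v + nb t v.

Lemma nb_le t v : nb t v <= dg v.
Proof. by rewrite /nb /deg; apply: sub_count => u /andP[_]; rewrite adj_sym. Qed.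

Lemma Dis t : Inv t -> forall v, v \in B t.+1 -> ~~ tb t v.
Proof.
move=> I v /Bsucc [vr _ hd]; apply/negP => tv.
have := I v vr; rewrite tv mul1n; have := nb_le t v; have := stable vr; lia.
Qed.

Lemma InvS t : Inv t -> Inv t.+1.
Proof.
move=> I v vr; have D := Dis I.
have -> : nb t.+1 v = nb t v + count (fun u => (u \in B t.+1) && ad u v) (iota 0 n.+1).
  rewrite /nb -count_or; first by apply: eq_count => u; rewrite tbS andb_orl.
  move=> u; case E: (u \in B t.+1); last by rewrite andbF.
  by rewrite (negbTE (D _ E)).
rewrite s_succ tbS; have := I v vr.
case E: (v \in B t.+1).
  have [_ _ hd] := Bsucc E; rewrite (negbTE (D _ E)) /= mul1n mul0n; lia.
rewrite orbF /= mul0n subn0; lia.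
Qed.

Lemma Inv0 : Inv 0.
Proof.
move=> v /andP[v0 vn]; rewrite s0 /nb.
have -> : tb 0 v = false by rewrite /tb /= orbF inE gtn_eqF.
rewrite inE gtn_eqF //= mul0n subn0 addn0; congr (_ + _).
by congr (_ + _); apply: eq_count => u; rewrite /tb /= orbF.
Qed.

Lemma InvA t : Inv t.
Proof. elim: t => [|t IH]; [exact: Inv0 | exact: InvS]. Qed.

Lemma DisA t v : v \in B t.+1 -> ~~ tb t v.
Proof. exact: Dis (InvA t) v. Qed.

Definition tbc t := count (tb t) (iota 1 n).

Lemma tbc_le t : tbc t <= n.
Proof. by rewrite /tbc (leq_trans (count_size _ _)) // size_iota. Qed.

Lemma tbc_S t : tbc t + (B t.+1 != [::]) <= tbc t.+1.
Proof.
case E: (B t.+1) => [|u l] /=.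
  by rewrite addn0 /tbc; apply: sub_count => u; rewrite tbS => ->.
rewrite addn1; apply: count_lt; first by move=> x; rewrite tbS => ->.
have uB : u \in B t.+1 by rewrite E mem_head.
have [/andP[u0 un] _ _] := Bsucc uB.
exists u; first by rewrite mem_iota u0 add1n ltnS.
by rewrite tbS uB orbT DisA.
Qed.

Lemma pigeon k : (exists2 k', k' < k & (B k'.*2.+1 == [::]) && (B k'.*2.+2 == [::]))
  \/ k <= tbc k.*2.
Proof.
elim: k => [|k [[k' lt H]|IH]]; first by right.
  by left; exists k' => //; rewrite ltnS ltnW.
case E: ((B k.*2.+1 == [::]) && (B k.*2.+2 == [::])); first by left; exists k.
right; rewrite doubleS; have h1 := tbc_S k.*2; have h2 := tbc_S k.*2.+1.
move: E h1 h2; case: (B k.*2.+1 == [::]); case: (B k.*2.+2 == [::]) => //= _; lia.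
Qed.

Lemma exists_empty : exists t, (B t.+1 == [::]) && (B t.+2 == [::]).
Proof.
case: (pigeon n.+1) => [[k' _ H]|]; first by exists k'.*2.
have := tbc_le (n.+1).*2; lia.
Qed.

Lemma closed_empty m (P : pred nat) :
  count (fun u => P u && rF u) (iota 0 n.+1) <= m ->
  (forall u, P u -> u <= n) ->
  (forall r, P r -> rF r -> exists c, [/\ P c, cl r c & T r c = false]) ->
  (forall c, P c -> cF c -> exists r, [/\ P r, cl r c & T r c = true]) ->
  forall v, ~~ P v.
Proof.
case: HT => h0 [hrow hrect].
elim: m P => [|m IH] P Hc Hle Hr Hcl v; apply/negP => Pv;
 (have [r [Pr rr]] : exists r, P r /\ rF r by
   case/orP: (rF_or_cF (Hle v Pv)) => [rv|cv];
   [by exists v | have [r [Pr crc _]] := Hcl v Pv cv; exists r; split => //; exact: cell_r crc]).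
  have : 0 < count (fun u => P u && rF u) (iota 0 n.+1).
    by rewrite -has_count; apply/hasP; exists r; [exact/in_iota0/rF_le | rewrite Pr rr].
  lia.
have exr : exists r, P r && rF r by exists r; rewrite Pr rr.
case: (ex_minnP exr) => rs /andP[Prs rrs] minr.
have [c0 [Pc0 cc0 Tc0]] := Hr rs Prs rrs.
pose C0 := fun u => [&& P u, cl rs u & ~~ T rs u].
pose R' := fun u => [&& P u, rF u, u != rs & has (fun c => C0 c && cl u c) (iota 0 n.+1)].
pose P' := fun u => C0 u || R' u.
have P'c0 : P' c0 by rewrite /P' /C0 Pc0 cc0 Tc0.
have P'P : forall u, P' u -> P u by move=> u /orP[/and3P[] | /and4P[]].
have rs_lt : forall c, P c -> cF c -> forall r, P r -> rF r -> cl r c -> cl rs c.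
  move=> c Pc cc r' Pr' rr' crc; rewrite /cell rrs cc /=.
  exact: leq_ltn_trans (minr r' (introT andP (conj Pr' rr'))) (cell_lt crc).
suff : ~~ P' c0 by rewrite P'c0.
apply: IH.
- rewrite -ltnS; apply: leq_trans Hc; apply: count_lt.
    by move=> x /andP[/P'P -> ->].
  exists rs; first exact/in_iota0/rF_le.
  rewrite Prs rrs /= /P' /C0 /R' eqxx /= !andbF orbF.
  by rewrite andbT; apply/negP => /and3P[_ /cell_lt]; rewrite ltnn.
- by move=> u /P'P /Hle.
- move=> r' P'r rr'.
  have {P'r} : R' r'.
    case/orP: P'r => // /and3P[_ /cell_c cr _]; by move: (rFcF rr'); rewrite cr.
  case/and4P => Pr' _ _ /hasP [c' _ /andP[/and3P[Pc' crc' nTc'] cr'c']].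
  have [c [Pc crc Trc]] := Hr r' Pr' rr'.
  have crsc : cl rs c := rs_lt c Pc (cell_c crc) r' Pr' rr' crc.
  case Tc: (T rs c).
    exists c'; split => //; first by rewrite /P' /C0 Pc' crc' nTc'.
    case Tr0: (T r' c') => //; exfalso.
    apply: (hrect rs r' c' c crc' crsc cr'c' crc); split => //; exact: negbTE.
  by exists c; split => //; rewrite /P' /C0 Pc crsc Tc.
- move=> c P'c cc.
  have {P'c} : C0 c.
    case/orP: P'c => // /and4P[_ rc _ _]; by move: (rFcF rc); rewrite cc.
  case/and3P => Pc crsc nT.
  have [r' [Pr' crc Trc]] := Hcl c Pc cc.
  exists r'; split => //; apply/orP; right; rewrite /R' Pr' (cell_r crc) !andTb.
  apply/andP; split.
    by apply/eqP => e; move: nT; rewrite -e Trc.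
  apply/hasP; exists c; first exact/in_iota0/cF_le.
  by rewrite /C0 Pc crsc nT crc.
Qed.

Lemma all_toppled : exists t, forall v, v <= n -> tb t v.
Proof.
have [t /andP[/eqP E1 /eqP E2]] := exists_empty.
exists t.
have sS : forall v, s t.+1 v = s t v.
  move=> v; rewrite s_succ E1 in_nil mul0n subn0.
  by rewrite (eq_count (a2 := pred0)) ?count_pred0 ?addn0 // => u; rewrite in_nil.
have st : forall v, 0 < v <= n -> s t v < dg v.
  move=> v vr; rewrite ltnNge; apply/negP => hd.
  have vn : v <= n by case/andP: vr.
  case: (boolP (odd t.+1)) => o; case/orP: (rF_or_cF vn) => vt.
  - have : v \in B t.+2 by apply: Bin => //; [rewrite (_ : odd t.+2 = ~~ odd t.+1) // o | rewrite sS].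
    by rewrite E2.
  - have : v \in B t.+1 by apply: Bin => //; rewrite o.
    by rewrite E1.
  - have : v \in B t.+1 by apply: Bin => //; rewrite (negbTE o).
    by rewrite E1.
  - have : v \in B t.+2 by apply: Bin => //; [rewrite (_ : odd t.+2 = ~~ odd t.+1) // o | rewrite sS].
    by rewrite E2.
pose P := fun u => (0 < u <= n) && ~~ tb t u.
have key : forall v, 0 < v <= n -> ~~ tb t v ->
    cc v < count (fun u => ~~ tb t u && ad u v) (iota 0 n.+1).
  move=> v vr ntv; have := InvA t vr; rewrite (negbTE ntv) mul0n addn0.
  have := st v vr; rewrite /deg (count_split _ (tb t)) /nb.
  have -> : count (fun x => tb t x && ad v x) (iota 0 n.+1) =
            count (fun u => tb t u && ad u v) (iota 0 n.+1).
    by apply: eq_count => u; rewrite adj_sym.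
  have -> : count (fun x => ~~ tb t x && ad v x) (iota 0 n.+1) =
            count (fun u => ~~ tb t u && ad u v) (iota 0 n.+1).
    by apply: eq_count => u; rewrite adj_sym.
  lia.
have PP : forall u, ~~ tb t u -> u <= n -> P u.
  move=> u ntu un; rewrite /P ntu un andbT.
  by case: u ntu un => // ntu; rewrite tb0 in ntu.
have := @closed_empty _ P (leqnn _).
case: HT => h0 [hrow hrect].
move=> H v vn; apply/negPn; apply/negP => ntv.
have v0 : 0 < v by rewrite lt0n; apply/negP => /eqP v0; move: ntv; rewrite v0 tb0.
suff : ~~ P v by rewrite /P v0 vn ntv.
apply: H.
- by move=> u /andP[/andP[]].
- move=> r /andP[rr ntr] rF_r.
  have := key r rr ntr.
  have ir : isrow r by case/andP: rF_r.
  rewrite /phiTC ir.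
  case: (boolP (has (fun u => (~~ tb t u && ad u r) && ~~ (cl r u && T r u)) (iota 0 n.+1))).
    case/hasP => u _ /andP[/andP[ntu aur] nc].
    rewrite adj_sym adj_row // in aur.
    exists u; split => //; first exact: PP ntu (cF_le (cell_c aur)).
    by move: nc; rewrite aur /=; case: (T r u).
  move/hasPn => Hn Hlt; exfalso.
  have : count (fun u => ~~ tb t u && ad u r) (iota 0 n.+1) <=
         count (fun j => cl r j && T r j) (iota 0 n.+1).
    apply: count_le_in => x xs Qx; have := Hn x xs; rewrite Qx /=; exact: negbNE.
  lia.
- move=> c /andP[cr ntc] cF_c.
  have := key c cr ntc.
  have ic : isrow c = false by case/andP: cF_c => _ /negbTE.
  rewrite /phiTC ic.
  case: (boolP (has (fun u => (~~ tb t u && ad u c) && ~~ (cl u c && ~~ T u c)) (iota 0 n.+1))).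
    case/hasP => u _ /andP[/andP[ntu auc] nc].
    rewrite adj_sym adj_col // in auc.
    exists u; split => //; first exact: PP ntu (rF_le (cell_r auc)).
    by move: nc; rewrite auc /=; case: (T u c).
  move/hasPn => Hn Hlt; exfalso.
  have : count (fun u => ~~ tb t u && ad u c) (iota 0 n.+1) <=
         count (fun i => cl i c && ~~ T i c) (iota 0 n.+1).
    apply: count_le_in => x xs Qx; have := Hn x xs; rewrite Qx /=; exact: negbNE.
  lia.
Qed.

Lemma exB v : v <= n -> exists t, v \in B t.
Proof.
have [t H] := all_toppled => /H /hasP [t' _ h]; by exists t'.
Qed.

Lemma uniqB v t1 t2 : v \in B t1 -> v \in B t2 -> t1 = t2.
Proof.
wlog lt : t1 t2 / t1 <= t2.
  move=> W h1 h2; case: (leqP t1 t2) => h; first exact: W.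
  by apply/esym/W => //; apply: ltnW.
move=> h1 h2; have [//|lt'] : t1 = t2 \/ t1 < t2 by lia.
exfalso.
case: t2 lt lt' h2 => // t2 _ lt' h2.
have := DisA h2; rewrite /tb; case/negP; apply/hasP; exists t1 => //.
by rewrite mem_iota.
Qed.

Lemma not_adj_same t1 t2 u v : u \in B t1 -> v \in B t2 -> odd t1 = odd t2 -> ~~ ad u v.
Proof.
move=> /Btype h1 /Btype h2 e; rewrite -e in h2; move: h1 h2.
case: (odd t1) => h1 h2.
  rewrite adj_col //; apply/negP => /cell_r rv; by move: (rFcF rv); rewrite h2.
rewrite adj_row //; apply/negP => /cell_c => cv; by move: (rFcF h2); rewrite cv.
Qed.

Lemma predB t v : v \in B t.+1 -> exists u, u \in B t.
Proof.
case: t => [|t] H; first by exists 0; rewrite B0.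
case E: (B t.+1) => [|u l]; last by exists u; rewrite mem_head.
exfalso; have [vr vty hd] := Bsucc H.
have sS : s t.+1 v = s t v.
  rewrite s_succ E in_nil mul0n subn0.
  by rewrite (eq_count (a2 := pred0)) ?count_pred0 ?addn0 // => u; rewrite in_nil.
rewrite sS in hd.
case: t E H vty hd sS => [|t] E H vty hd sS.
  have rv : rF v by [].
  have := Inv0 vr.
  have -> : tb 0 v = false by rewrite /tb /= inE gtn_eqF //; case/andP: vr.
  have -> : nb 0 v = 0.
    rewrite /nb (eq_count (a2 := pred0)) ?count_pred0 // => u /=.
    case tu: (tb 0 u) => //=.
    have u0 : u = 0 by move: tu; rewrite /tb /= inE orbF => /eqP.
    by rewrite u0 adj_sym adj_row //; apply/negP => /cell_lt.
  have := stable vr; lia.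
have nB : v \notin B t.+1.
  by apply/negP => h; have := uniqB h H; lia.
have : s t v < dg v.
  rewrite ltnNge; apply/negP => h; move/negP: nB; apply.
  by apply: Bin => //; move: vty; rewrite /= negbK.
have e : s t.+1 v = s t v.
  rewrite s_succ (negbTE nB) mul0n subn0.
  rewrite (eq_count (a2 := pred0)) ?count_pred0 ?addn0 //.
  move=> u; have := @not_adj_same t.+1 t.+3 u v.
  case: (u \in B t.+1) => // /(_ isT H) h; apply/negbTE/h; by rewrite /= negbK.
lia.
Qed.

Lemma Brow v t : v \in B t -> rF v -> exists m, t = m.*2.
Proof.
move=> /Btype h rv; exists t./2; rewrite -[t in LHS]odd_double_half.
case: (odd t) h => // cv; by move: (rFcF rv); rewrite cv.
Qed.

Lemma Bcol v t : v \in B t -> cF v -> exists m, t = m.*2.+1.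
Proof.
move=> /Btype h cv; exists t./2; rewrite -[t in LHS]odd_double_half.
case: (odd t) h => // rv; by move: (rFcF rv); rewrite cv.
Qed.

Lemma Brow' v m : v \in B m.*2 -> rF v.
Proof. by move/Btype; rewrite odd_double. Qed.

Lemma Bcol' v m : v \in B m.*2.+1 -> cF v.
Proof. by move/Btype; rewrite /= odd_double. Qed.

Lemma mainA :
  (forall l j k, inU n isrow T l j -> cF k -> j < k ->
     (inV n isrow T l k <->
        (Sval n isrow T j k false /\ ~ cornersupport n isrow T j k false))) /\
  (forall l j k, inV n isrow T l j -> rF k -> k < j ->
     (inU n isrow T l.-1 k <->
        (Sval n isrow T k j true /\ ~ cornersupport n isrow T k j true))).
Proof.
split.
- move=> l j k Hj ck jk; rewrite /inU in Hj; split.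
  + case: l Hj => [|l] Hj // Hk0; have Hk : k \in B l.*2.+1 := Hk0.
    rewrite /Sval /=; split.
      move=> [t [t' [lt jt kt']]].
      have := uniqB jt Hj; have := uniqB kt' Hk; rewrite doubleS; lia.
    move=> [j' [k' [rj' ck' _ _ [S1 S2 S3]]]]; move: S1 S2 S3; rewrite /Sval /=.
    move=> [t1 [t2 [lt j't1 k't2]]] S2 S3.
    have [m1 e1] := Brow j't1 rj'.
    have h2 : ~ (t1 < l.*2.+1) by move=> h; apply: S2; exists t1, l.*2.+1.
    have h3 : ~ (l.+1.*2 < t2) by move=> h; apply: S3; exists l.+1.*2, t2.
    rewrite doubleS in h3; lia.
  + rewrite /Sval /= => [[S1 S2]].
    have [tk kt] := exB (cF_le ck); have [m em] := Bcol kt ck.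
    have h1 : ~ (l.*2 < tk) by move=> h; apply: S1; exists l.*2, tk.
    case: l Hj h1 => [|l] Hj h1; first lia.
    have [e|ml] : m = l \/ m < l by rewrite doubleS in h1; lia.
      by rewrite /inV -e -em.
    case: l Hj h1 ml => [|l] // Hj h1 ml.
    rewrite !doubleS in Hj.
    have [k' k'B] := predB Hj; have [j' j'B] := predB k'B.
    exfalso; apply: S2; exists j', k'; split.
    * by apply: (@Brow' _ l.+1); rewrite doubleS.
    * exact: (@Bcol' _ l.+1).
    * by move=> e; rewrite e in j'B; have := uniqB j'B Hj; lia.
    * by move=> e; rewrite e in k'B; have := uniqB k'B kt; lia.
    * rewrite /Sval /=; split.
      - by exists l.*2.+2, l.*2.+3.
      - move=> [t [t' [lt a b]]]; have := uniqB a j'B; have := uniqB b kt; lia.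
      - move=> [t [t' [lt a b]]]; have := uniqB a Hj; have := uniqB b k'B; lia.
- move=> l j k Hj rk kj; case: l Hj => [|l] Hj0 //; have Hj : j \in B l.*2.+1 := Hj0.
  rewrite /inU /Sval /=; split.
  + move=> Hk; split; first by exists l.*2, l.*2.+1.
    move=> [j' [k' [rj' ck' _ _ [S1 S2 S3]]]]; move: S1 S2 S3; rewrite /Sval /=.
    move=> S1 [t1 [t2 [lt1 a1 b1]]] [t3 [t4 [lt2 a2 b2]]].
    have := uniqB b1 Hj; have := uniqB a2 Hk => e3 e2.
    apply: S1; exists t1, t4; split => //; lia.
  + move=> [[t [t' [lt kt jt']]] S2].
    have e' := uniqB jt' Hj; have [m em] := Brow kt rk.
    have [e|ml] : m = l \/ m < l by lia.
      by rewrite -e -em.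
    clear Hj0; case: l ml Hj e' => [|l] // ml Hj e'.
    have [j' j'B0] := predB Hj.
    have j'B : j' \in B l.*2.+2 by rewrite -doubleS.
    have [k' k'B] := predB j'B.
    exfalso; apply: S2; exists j', k'; split.
    * exact: Brow' j'B0.
    * exact: Bcol' k'B.
    * by move=> e; rewrite e in j'B; have := uniqB j'B kt; lia.
    * by move=> e; rewrite e in k'B; have := uniqB k'B Hj; lia.
    * rewrite /Sval /=; split.
      - move=> [t1 [t2 [lt1 a b]]]; have := uniqB a j'B; have := uniqB b k'B; lia.
      - by exists l.*2.+2, l.+1.*2.+1; split => //; lia.
      - by exists t, l.*2.+1; split => //; lia.
Qed.
End Main.

Theorem lemma4p9 (n : nat) (isrow : nat -> bool) (T : nat -> nat -> bool) :
  ferrers n isrow -> is_EWtab n isrow T ->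
  (forall l j k, inU n isrow T l j -> colF n isrow k -> j < k ->
     (inV n isrow T l k <->
        (Sval n isrow T j k false /\ ~ cornersupport n isrow T j k false))) /\
  (forall l j k, inV n isrow T l j -> rowF n isrow k -> k < j ->
     (inU n isrow T l.-1 k <->
        (Sval n isrow T k j true /\ ~ cornersupport n isrow T k j true))).
Proof. move=> Hf HT; exact: mainA Hf HT. Qed.
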